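(* Let $k\ge1$ and $0\le s\le k$. The determinant of the Gram matrix $G^k_s$ (defined in the context) is a nonzero polynomial in $\mathbb{Z}[x]$ with leading coefficient $1$.
   Context: Partition diagrams: for $k\ge1$ let $[k]=\{1,\dots,k\}$, $[k']=\{1',\dots,k'\}$; a $k$-partition diagram is a set partition of $[k]\cup[k']$ (vertices $1,\dots,k$ in a top row, $1',\dots,k'$ in a bottom row). A block meeting both $[k]$ and $[k']$ is a through class; other blocks are horizontal edges. The propagating number $\sharp^p(d)$ is the number of through classes of $d$. The product of diagrams $d_1,d_2$: place $d_1$ above $d_2$, identify the bottom vertices of $d_1$ with the top vertices of $d_2$ (forming a middle row), take the partition of the top row of $d_1$ and bottom row of $d_2$ induced by connectivity, giving a diagram $d_3$; let $l(d_1,d_2)$ be the number of connected components lying entirely in the middle row. Then $d_1\circ d_2=x^{l(d_1,d_2)}d_3$, and $\sharp^p(d_1 d_2)$ means $\sharp^p(d_3)$. Index set: $J^k_s$ is the set of pairs $D=(\pi,T)$ where $\pi$ is a set partition of $[k]$ and $T$ is a set of $s$ blocks of $\pi$. To $D$ associate the diagram $d_D$ whose blocks are $B\cup B'$ for $B\in T$, and $B$, $B'$ separately for $B\in\pi\setminus T$ (here $B'=\{i':i\in B\}$). Gram matrix: $G^k_s$ is the square matrix with rows and columns indexed by $J^k_s$ whose $(D,E)$ entry is $x^{l(d_D,d_E)}$ if $\sharp^p(d_D d_E)=s$ and $0$ otherwise. *)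

(* Defs.v *)
From HB Require Import structures.
From mathcomp Require Import all_boot all_order all_algebra.
Set Implicit Arguments. Unset Strict Implicit. Unset Printing Implicit Defensive.
Import GRing.Theory.

Definition vert (k : nat) := ('I_k + 'I_k)%type.
Definition top (k : nat) (i : 'I_k) : vert k := inl i.
Definition bot (k : nat) (i : 'I_k) : vert k := inr i.

Definition diagram (k : nat) := {set {set vert k}}.
Definition is_diagram (k : nat) (d : diagram k) : bool := partition d [set: vert k].

Definition through (k : nat) (B : {set vert k}) : bool :=
  [exists i, top i \in B] && [exists i, bot i \in B].
Definition propnum (k : nat) (d : diagram k) : nat := #|[set B in d | through B]|%N.

(* Stacking: vertices of three rows, row 0 = top of d1, row 1 = middle, row 2 = bottom of d2. *)
Definition row0 : 'I_3 := inord 0.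
Definition row1 : 'I_3 := inord 1.
Definition row2 : 'I_3 := inord 2.
Definition svert (k : nat) := ('I_3 * 'I_k)%type.

Definition emb1 (k : nat) (v : vert k) : svert k :=
  match v with inl i => (row0, i) | inr i => (row1, i) end.
Definition emb2 (k : nat) (v : vert k) : svert k :=
  match v with inl i => (row1, i) | inr i => (row2, i) end.
(* outer rows: top of d1 and bottom of d2 form the vertices of the product *)
Definition embo (k : nat) (v : vert k) : svert k :=
  match v with inl i => (row0, i) | inr i => (row2, i) end.

Definition stack_edge (k : nat) (d1 d2 : diagram k) : rel (svert k) :=
  fun u w =>
    [exists B in d1, (u \in @emb1 k @: B) && (w \in @emb1 k @: B)]
    || [exists B in d2, (u \in @emb2 k @: B) && (w \in @emb2 k @: B)].

Definition stack_comp (k : nat) (d1 d2 : diagram k) (u : svert k) : {set svert k} :=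
  [set w | connect (stack_edge d1 d2) u w].
Definition stack_comps (k : nat) (d1 d2 : diagram k) : {set {set svert k}} :=
  [set stack_comp d1 d2 u | u : svert k].

Definition middle_row (k : nat) : {set svert k} := [set u | u.1 == row1].
Definition nloops (k : nat) (d1 d2 : diagram k) : nat :=
  #|[set C in stack_comps d1 d2 | C \subset middle_row k]|.

Definition dprod (k : nat) (d1 d2 : diagram k) : diagram k :=
  [set [set v : vert k | embo v \in C] | C : {set svert k} in stack_comps d1 d2] :\ set0.

Definition Jpred (k s : nat) (D : {set {set 'I_k}} * {set {set 'I_k}}) : bool :=
  [&& partition D.1 [set: 'I_k], D.2 \subset D.1 & #|D.2| == s].
Definition Jks (k s : nat) := {D : {set {set 'I_k}} * {set {set 'I_k}} | Jpred s D}.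

Definition liftT (k : nat) (B : {set 'I_k}) : {set vert k} := [set top i | i in B].
Definition liftB (k : nat) (B : {set 'I_k}) : {set vert k} := [set bot i | i in B].

Definition dD (k : nat) (D : {set {set 'I_k}} * {set {set 'I_k}}) : diagram k :=
  [set liftT B :|: liftB B | B in D.2]
  :|: [set liftT B | B in D.1 :\: D.2]
  :|: [set liftB B | B in D.1 :\: D.2].

Local Open Scope ring_scope.
Definition gram_entry (k s : nat) (D E : {set {set 'I_k}} * {set {set 'I_k}}) : {poly int} :=
  if propnum (dprod (dD D) (dD E)) == s then 'X ^+ nloops (dD D) (dD E) else 0.

Definition Gram (k s : nat) : 'M[{poly int}]_#|{: Jks k s}| :=
  \matrix_(i, j) gram_entry s (val (enum_val i)) (val (enum_val j)).

(* Main.v *)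
Require Import Defs.
From HB Require Import structures.
From mathcomp Require Import all_boot all_order all_algebra fingroup perm.
From mathcomp Require Import zify.
Import Defs.
Set Implicit Arguments. Unset Strict Implicit. Unset Printing Implicit Defensive.
Import GRing.Theory.
Section Det.
Local Open Scope ring_scope.

Lemma det_monic n (M : 'M[{poly int}]_n) (a : 'I_n -> nat) :
  (forall i, M i i = 'X^(a i)) ->
  (forall i j, i != j -> M i j = 0 \/ exists2 e, M i j = 'X^e & (e + e < a i + a j)%N) ->
  \det M \is monic.
Proof.
move=> Hd Ho.
rewrite /determinant (bigD1 (1%g : 'S_n)) //=.
rewrite perm.odd_perm1 expr0 mul1r.
rewrite (eq_bigr (fun i => 'X^(a i))); last by move=> i _; rewrite perm.perm1 Hd.
rewrite prodrXr.
set N := (\sum_i a i)%N.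
rewrite monicE lead_coefDl ?lead_coefXn // size_polyXn ltnS.
apply: (big_ind (fun q : {poly int} => size q <= N)%N).
- by rewrite size_poly0.
- by move=> x y Hx Hy; apply: leq_trans (size_polyD _ _) _; rewrite geq_max Hx Hy.
move=> sg Hsg.
have Hprod : leq (size (\prod_i M i (sg i))) N.
  case: (boolP [exists i, M i (sg i) == (0 : {poly int})]) => [/existsP [i /eqP Hi]|Hnz].
    by rewrite (bigD1 i) //= Hi mul0r size_poly0.
  have Hnz' : forall i, M i (sg i) != 0.
    by move=> i; apply/negP => Hi; move/negP: Hnz; apply; apply/existsP; exists i.
  pose c i := (size (M i (sg i))).-1.
  have Hc : forall i, M i (sg i) = 'X^(c i) /\ (c i + c i <= a i + a (sg i))%N
                      /\ (sg i != i -> (c i + c i < a i + a (sg i))%N).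
    move=> i; case: (eqVneq (sg i) i) => [Hsi|Hsi].
      by rewrite /c Hsi Hd size_polyXn /=.
    case: (Ho i (sg i)); first by rewrite eq_sym.
      by move=> H0; move: (Hnz' i); rewrite H0 eqxx.
    move=> [e He Hlt]; rewrite /c He size_polyXn /=; split => //; split => //.
    exact: ltnW.
  rewrite (eq_bigr (fun i => 'X^(c i))); last by move=> i _; case: (Hc i).
  rewrite prodrXr size_polyXn.
  have [i0 Hi0] : exists i0, sg i0 != i0.
    apply/existsP; apply/negP => /existsP Hno; move/eqP: Hsg; apply.
    apply/perm.permP => i; rewrite perm.perm1; apply/eqP; apply/negPn.
    by apply/negP => H; apply: Hno; exists i.
  have : ((\sum_i (c i + c i)) < (\sum_i (a i + a (sg i))))%N.
    rewrite (bigD1 i0) //= [X in (_ < X)%N](bigD1 i0) //= -addSn.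
    apply: leq_add; first by case: (Hc i0) => _ [_ ->].
    by apply: leq_sum => i _; case: (Hc i) => _ [].
  have HsN : (\sum_i a (sg i))%N = N.
    by symmetry; exact: (reindex_inj (@perm.perm_inj _ sg)).
  rewrite !big_split /= HsN => H.
  clear HsN; move: H; rewrite -/N; set x := (\sum_i c i)%N; move: x N => x y; lia.
case: (perm.odd_perm sg); rewrite ?expr1 ?expr0 ?mulN1r ?mul1r ?size_polyN //.
Qed.
End Det.
Section Comb.
Variable k : nat.
Local Notation pairT := ({set {set 'I_k}} * {set {set 'I_k}})%type.

Definition wf (D : pairT) := partition D.1 [set: 'I_k] && (D.2 \subset D.1).

Definition blk (D : pairT) (i : 'I_k) := pblock D.1 i.

Definition relP (D : pairT) (a b : vert k) : bool :=
  match a, b with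
  | inl i, inl j => blk D i == blk D j
  | inr i, inr j => blk D i == blk D j
  | inl i, inr j => (blk D i == blk D j) && (blk D i \in D.2)
  | inr i, inl j => (blk D i == blk D j) && (blk D i \in D.2)
  end.

Definition idx (v : vert k) : 'I_k := match v with inl i => i | inr i => i end.

Lemma top_inj : injective (@top k). Proof. by move=> x y []. Qed.
Lemma bot_inj : injective (@bot k). Proof. by move=> x y []. Qed.

Lemma in_liftT (B : {set 'I_k}) (v : vert k) : (v \in liftT B) = (if v is inl i then i \in B else false).
Proof.
case: v => i; first by rewrite (mem_imset _ _ top_inj).
by apply/imsetP => [[j _]].
Qed.

Lemma in_liftB (B : {set 'I_k}) (v : vert k) : (v \in liftB B) = (if v is inr i then i \in B else false).
Proof.
case: v => i; last by rewrite (mem_imset _ _ bot_inj).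
by apply/imsetP => [[j _]].
Qed.

Lemma in_liftTB (B : {set 'I_k}) (v : vert k) : (v \in liftT B :|: liftB B) = (idx v \in B).
Proof. by rewrite in_setU in_liftT in_liftB; case: v => i /=; rewrite ?orbF. Qed.

Variable D : pairT.
Hypothesis wfD : wf D.

Lemma wf_triv : trivIset D.1. Proof. by case/andP: wfD => /and3P []. Qed.
Lemma wf_cover : cover D.1 = [set: 'I_k]. Proof. by case/andP: wfD => /and3P [/eqP]. Qed.
Lemma wf_sub : D.2 \subset D.1. Proof. by case/andP: wfD. Qed.

Lemma blk_mem i : blk D i \in D.1.
Proof. by apply: pblock_mem; rewrite wf_cover inE. Qed.
Lemma blk_in i : i \in blk D i.
Proof. by rewrite /blk mem_pblock wf_cover inE. Qed.
Lemma blk_def B i : B \in D.1 -> i \in B -> blk D i = B.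
Proof. by move=> HB Hi; apply: def_pblock => //; exact: wf_triv. Qed.
Lemma blk_eq i j : (blk D i == blk D j) = (j \in blk D i).
Proof. by rewrite /blk eq_pblock ?wf_triv // wf_cover inE. Qed.

Lemma exTB i j a b : blk D i \in D.2 -> blk D i = blk D j -> idx a = i -> idx b = j ->
  exists X, [&& X \in dD D, a \in X & b \in X].
Proof.
move=> HT Heq Ha Hb; exists (liftT (blk D i) :|: liftB (blk D i)).
apply/and3P; split; first by rewrite /dD !in_setU (imset_f _ HT).
  by rewrite in_liftTB Ha blk_in.
by rewrite in_liftTB Heq Hb blk_in.
Qed.

Lemma exT i j : blk D i \notin D.2 -> blk D i = blk D j ->
  exists X, [&& X \in dD D, inl i \in X & inl j \in X].
Proof.
move=> HT Heq; exists (liftT (blk D i)).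
apply/and3P; split.
    by rewrite /dD !in_setU (imset_f _ (_ : blk D i \in D.1 :\: D.2)) ?orbT // in_setD HT blk_mem.
  by rewrite in_liftT blk_in.
by rewrite in_liftT Heq blk_in.
Qed.

Lemma exB i j : blk D i \notin D.2 -> blk D i = blk D j ->
  exists X, [&& X \in dD D, inr i \in X & inr j \in X].
Proof.
move=> HT Heq; exists (liftB (blk D i)).
apply/and3P; split.
    by rewrite /dD !in_setU (imset_f _ (_ : blk D i \in D.1 :\: D.2)) ?orbT // in_setD HT blk_mem.
  by rewrite in_liftB blk_in.
by rewrite in_liftB Heq blk_in.
Qed.

Lemma dD_rel a b :
  [exists X in dD D, (a \in X) && (b \in X)] = relP D a b.
Proof.
apply/existsP/idP.
- move=> [X /andP [HX /andP [Ha Hb]]].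
  move: HX Ha Hb; rewrite !in_setU => /orP [/orP [] | ] /imsetP [B HB ->] Ha Hb.
  + have HB1 : B \in D.1 by apply: (subsetP wf_sub).
    rewrite !in_liftTB in Ha Hb.
    have Ea := blk_def HB1 Ha; have Eb := blk_def HB1 Hb.
    by case: a b Ha Hb Ea Eb => i [] j /= _ _ -> ->; rewrite ?eqxx ?HB.
  + move: HB; rewrite in_setD => /andP [_ HB1].
    rewrite !in_liftT in Ha Hb.
    case: a b Ha Hb => i [] j //= Ha Hb.
    by rewrite (blk_def HB1 Ha) (blk_def HB1 Hb).
  + move: HB; rewrite in_setD => /andP [_ HB1].
    rewrite !in_liftB in Ha Hb.
    case: a b Ha Hb => i [] j //= Ha Hb.
    by rewrite (blk_def HB1 Ha) (blk_def HB1 Hb).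
- case: a b => i [] j /=.
  + move/eqP=> Heq; case: (boolP (blk D i \in D.2)) => HT.
      by apply: (exTB HT Heq).
    by apply: exT.
  + by case/andP => /eqP Heq HT; apply: (exTB HT Heq).
  + by case/andP => /eqP Heq HT; apply: (exTB HT Heq).
  + move/eqP=> Heq; case: (boolP (blk D i \in D.2)) => HT.
      by apply: (exTB HT Heq).
    by apply: exB.
Qed.

End Comb.
Lemma vr0 : nat_of_ord row0 = 0. Proof. exact: inordK. Qed.
Lemma vr1 : nat_of_ord row1 = 1. Proof. exact: inordK. Qed.
Lemma vr2 : nat_of_ord row2 = 2. Proof. exact: inordK. Qed.
Lemma r01 : (row0 == row1) = false. Proof. by rewrite -val_eqE /= vr0 vr1. Qed.
Lemma r02 : (row0 == row2) = false. Proof. by rewrite -val_eqE /= vr0 vr2. Qed.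
Lemma r12 : (row1 == row2) = false. Proof. by rewrite -val_eqE /= vr1 vr2. Qed.
Lemma r10 : (row1 == row0) = false. Proof. by rewrite eq_sym r01. Qed.
Lemma r20 : (row2 == row0) = false. Proof. by rewrite eq_sym r02. Qed.
Lemma r21 : (row2 == row1) = false. Proof. by rewrite eq_sym r12. Qed.
Lemma rowP (r : 'I_3) : r = row0 \/ r = row1 \/ r = row2.
Proof.
case: r => [[|[|[|m]]] Hr] //.
- by left; apply/val_inj; rewrite /= vr0.
- by right; left; apply/val_inj; rewrite /= vr1.
- by right; right; apply/val_inj; rewrite /= vr2.
Qed.

Section Edge.
Variable k : nat.

Definition lift1 (u : svert k) : option (vert k) :=
  if u.1 == row0 then Some (inl u.2) else if u.1 == row1 then Some (inr u.2) else None.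
Definition lift2 (u : svert k) : option (vert k) :=
  if u.1 == row1 then Some (inl u.2) else if u.1 == row2 then Some (inr u.2) else None.

Lemma lift1_0 (i : 'I_k) : lift1 ((row0, i) : svert k) = Some (inl i). Proof. by rewrite /lift1 /= eqxx. Qed.
Lemma lift1_1 (i : 'I_k) : lift1 ((row1, i) : svert k) = Some (inr i). Proof. by rewrite /lift1 /= eqxx r10. Qed.
Lemma lift1_2 (i : 'I_k) : lift1 ((row2, i) : svert k) = None. Proof. by rewrite /lift1 /= r20 r21. Qed.
Lemma lift2_0 (i : 'I_k) : lift2 ((row0, i) : svert k) = None. Proof. by rewrite /lift2 /= r01 r02. Qed.
Lemma lift2_1 (i : 'I_k) : lift2 ((row1, i) : svert k) = Some (inl i). Proof. by rewrite /lift2 /= eqxx. Qed.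
Lemma lift2_2 (i : 'I_k) : lift2 ((row2, i) : svert k) = Some (inr i). Proof. by rewrite /lift2 /= r21 eqxx. Qed.

Lemma in_emb1 (X : {set vert k}) u :
  (u \in [set @emb1 k x | x in X]) = (if lift1 u is Some v then v \in X else false).
Proof.
case: u => r i; case: (rowP r) => [->|[->|->]];
  rewrite ?lift1_0 ?lift1_1 ?lift1_2; apply/imsetP.
- case: ifP => H; first by exists (inl i).
  by move=> [[j|j] Hj /eqP]; rewrite /= xpair_eqE ?eqxx ?r01 ?r02 ?r10 ?r12 ?r20 ?r21 //= => /eqP E; by move: Hj; rewrite -E H.
- case: ifP => H; first by exists (inr i).
  by move=> [[j|j] Hj /eqP]; rewrite /= xpair_eqE ?eqxx ?r01 ?r02 ?r10 ?r12 ?r20 ?r21 //= => /eqP E; by move: Hj; rewrite -E H.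
by move=> [[j|j] Hj /eqP]; rewrite /= xpair_eqE ?eqxx ?r01 ?r02 ?r10 ?r12 ?r20 ?r21.
Qed.

Lemma in_emb2 (X : {set vert k}) u :
  (u \in [set @emb2 k x | x in X]) = (if lift2 u is Some v then v \in X else false).
Proof.
case: u => r i; case: (rowP r) => [->|[->|->]];
  rewrite ?lift2_0 ?lift2_1 ?lift2_2; apply/imsetP.
by move=> [[j|j] Hj /eqP]; rewrite /= xpair_eqE ?eqxx ?r01 ?r02 ?r10 ?r12 ?r20 ?r21.
- case: ifP => H; first by exists (inl i).
  by move=> [[j|j] Hj /eqP]; rewrite /= xpair_eqE ?eqxx ?r01 ?r02 ?r10 ?r12 ?r20 ?r21 //= => /eqP E; by move: Hj; rewrite -E H.
- case: ifP => H; first by exists (inr i).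
  by move=> [[j|j] Hj /eqP]; rewrite /= xpair_eqE ?eqxx ?r01 ?r02 ?r10 ?r12 ?r20 ?r21 //= => /eqP E; by move: Hj; rewrite -E H.
Qed.

Variables D E : ({set {set 'I_k}} * {set {set 'I_k}})%type.
Hypotheses (wfD : wf D) (wfE : wf E).

Definition ledge (u w : svert k) : bool :=
  (if lift1 u is Some a then if lift1 w is Some b then relP D a b else false else false)
  || (if lift2 u is Some a then if lift2 w is Some b then relP E a b else false else false).

Lemma edgeE u w : stack_edge (dD D) (dD E) u w = ledge u w.
Proof.
rewrite /stack_edge /ledge; congr orb.
- transitivity [exists B in dD D, (if lift1 u is Some v then v \in B else false) && (if lift1 w is Some v then v \in B else false)].
    by apply: eq_existsb => B; rewrite !in_emb1.
  case: (lift1 u) => [a|]; case: (lift1 w) => [b|]; rewrite ?dD_rel //;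
    by apply/existsP => [[B]]; rewrite ?andbF.
- transitivity [exists B in dD E, (if lift2 u is Some v then v \in B else false) && (if lift2 w is Some v then v \in B else false)].
    by apply: eq_existsb => B; rewrite !in_emb2.
  case: (lift2 u) => [a|]; case: (lift2 w) => [b|]; rewrite ?dD_rel //;
    by apply/existsP => [[B]]; rewrite ?andbF.
Qed.

End Edge.
Section Graph.
Variable k : nat.
Variables D E : ({set {set 'I_k}} * {set {set 'I_k}})%type.
Hypotheses (wfD : wf D) (wfE : wf E).

Local Notation G := (stack_edge (dD D) (dD E)).
Local Notation comp := (stack_comp (dD D) (dD E)).

Lemma Gsym : symmetric G.
Proof.
move=> u w; rewrite /stack_edge; congr orb; apply: eq_existsb => B; congr andb; exact: andbC.
Qed.

Lemma Csym : connect_sym G. Proof. exact: sym_connect_sym Gsym. Qed.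

Lemma in_comp u w : (w \in comp u) = connect G u w.
Proof. by rewrite inE. Qed.

Lemma comp_self u : u \in comp u.
Proof. by rewrite in_comp connect0. Qed.

Lemma comp_eq u w : connect G u w -> comp u = comp w.
Proof. by move=> H; apply/setP => x; rewrite !in_comp (same_connect Csym H). Qed.

Lemma comp_eq' u w : w \in comp u -> comp u = comp w.
Proof. by rewrite in_comp; exact: comp_eq. Qed.

Lemma e00 i j : blk D i = blk D j -> G (row0, i) (row0, j).
Proof. by move=> H; rewrite edgeE // /ledge /lift1 /lift2 /= ?eqxx ?r01 ?r02 ?r10 ?r12 ?r20 ?r21 /=; apply/orP; left; apply/eqP; exact: H. Qed.
Lemma e01 i : blk D i \in D.2 -> G (row0, i) (row1, i).
Proof. by move=> H; rewrite edgeE // /ledge /lift1 /lift2 /= ?eqxx ?r01 ?r02 ?r10 ?r12 ?r20 ?r21 /=; rewrite ?orbF; apply/andP; split => //; apply/eqP. Qed.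
Lemma e11D i j : blk D i = blk D j -> G (row1, i) (row1, j).
Proof. by move=> H; rewrite edgeE // /ledge /lift1 /lift2 /= ?eqxx ?r01 ?r02 ?r10 ?r12 ?r20 ?r21 /=; apply/orP; left; apply/eqP; exact: H. Qed.
Lemma e11E i j : blk E i = blk E j -> G (row1, i) (row1, j).
Proof. by move=> H; rewrite edgeE // /ledge /lift1 /lift2 /= ?eqxx ?r01 ?r02 ?r10 ?r12 ?r20 ?r21 /=; apply/orP; right; apply/eqP; exact: H. Qed.
Lemma e12 i : blk E i \in E.2 -> G (row1, i) (row2, i).
Proof. by move=> H; rewrite edgeE // /ledge /lift1 /lift2 /= ?eqxx ?r01 ?r02 ?r10 ?r12 ?r20 ?r21 /=; rewrite ?orbF; apply/andP; split => //; apply/eqP. Qed.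

Lemma c_edge u w : G u w -> connect G u w.
Proof. by move=> H; apply: connect1. Qed.
Lemma c_edge' u w : G w u -> connect G u w.
Proof. by rewrite Gsym; exact: c_edge. Qed.

Lemma G_from0 i r j : G (row0, i) (r, j) ->
  (r = row0 /\ blk D i = blk D j) \/ (r = row1 /\ blk D i = blk D j /\ blk D i \in D.2).
Proof.
rewrite edgeE // /ledge lift1_0 lift2_0 orbF.
case: (rowP r) => [->|[->|->]]; rewrite ?lift1_0 ?lift1_1 ?lift1_2 //=.
- by move/eqP; left.
- by case/andP => /eqP ? ?; right.
Qed.

Lemma G_from1 i r j : G (row1, i) (r, j) ->
  (r = row0 /\ blk D i = blk D j /\ blk D i \in D.2)
  \/ (r = row1 /\ (blk D i = blk D j \/ blk E i = blk E j))
  \/ (r = row2 /\ blk E i = blk E j /\ blk E i \in E.2).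
Proof.
rewrite edgeE // /ledge lift1_1 lift2_1.
case: (rowP r) => [->|[->|->]]; rewrite ?lift1_0 ?lift1_1 ?lift1_2 ?lift2_0 ?lift2_1 ?lift2_2 /= ?orbF.
- by case/andP => /eqP ? ?; left.
- by case/orP => /eqP ?; right; left; split => //; [left|right].
- by case/andP => /eqP ? ?; right; right.
Qed.

Lemma G_from2 i r j : G (row2, i) (r, j) ->
  (r = row2 /\ blk E i = blk E j) \/ (r = row1 /\ blk E i = blk E j /\ blk E i \in E.2).
Proof.
rewrite edgeE // /ledge lift1_2 lift2_2 /=.
case: (rowP r) => [->|[->|->]]; rewrite ?lift2_0 ?lift2_1 ?lift2_2 //=.
- by case/andP => /eqP ? ?; right.
- by move/eqP; left.
Qed.

Lemma G_blk r i r' j : G (r, i) (r', j) -> blk D i = blk D j \/ blk E i = blk E j.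
Proof.
case: (rowP r) => [->|[->|->]].
- by case/G_from0 => [[_ ?]|[_ [? _]]]; left.
- by case/G_from1 => [[_ [? _]]|[[_ [?|?]]|[_ [? _]]]]; [left|left|right|right].
- by case/G_from2 => [[_ ?]|[_ [? _]]]; right.
Qed.

Lemma closedS (S : pred (svert k)) u w :
  (forall x y, S x -> G x y -> S y) -> connect G u w -> S u -> S w.
Proof.
move=> HS /connectP [p Hp ->]; elim: p u Hp => //= v p IH u /andP [Huv Hp] Su.
by apply: IH Hp _; exact: HS Su Huv.
Qed.

End Graph.
Arguments comp_self {k D E}. Arguments in_comp {k D E}.
Section Loops.
Variable k : nat.
Variables D E : ({set {set 'I_k}} * {set {set 'I_k}})%type.
Hypotheses (wfD : wf D) (wfE : wf E).

Local Notation G := (stack_edge (dD D) (dD E)).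
Local Notation comp := (stack_comp (dD D) (dD E)).

Lemma e22 (i j : 'I_k) : blk E i = blk E j -> G (row2, i) (row2, j).
Proof.
move=> H; rewrite edgeE // /ledge /lift1 /lift2 /= ?eqxx ?r01 ?r02 ?r10 ?r12 ?r20 ?r21 /=.
by apply/eqP.
Qed.

Definition hc (B : {set 'I_k}) : {set svert k} :=
  [set w | [exists i in B, connect G (row1, i) w]].

Lemma hc_D B i : B \in D.1 -> i \in B -> hc B = comp (row1, i).
Proof.
move=> HB Hi; apply/setP => w; rewrite inE in_comp; apply/existsP/idP.
- move=> [j /andP [Hj Hc]]; apply: connect_trans Hc; apply: c_edge; apply: e11D => //.
  by rewrite (blk_def wfD HB Hi) (blk_def wfD HB Hj).
- by move=> Hc; exists i; rewrite Hi.
Qed.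

Lemma hc_E B i : B \in E.1 -> i \in B -> hc B = comp (row1, i).
Proof.
move=> HB Hi; apply/setP => w; rewrite inE in_comp; apply/existsP/idP.
- move=> [j /andP [Hj Hc]]; apply: connect_trans Hc; apply: c_edge; apply: e11E => //.
  by rewrite (blk_def wfE HB Hi) (blk_def wfE HB Hj).
- by move=> Hc; exists i; rewrite Hi.
Qed.

Definition Lset := [set C in stack_comps (dD D) (dD E) | C \subset middle_row k].

Lemma in_middle (u : svert k) : (u \in middle_row k) = (u.1 == row1).
Proof. by rewrite inE. Qed.

Lemma Lset_comp C : C \in Lset -> exists i, C = comp (row1, i).
Proof.
rewrite inE => /andP [/imsetP [u _ ->] Hsub].
have := subsetP Hsub u (comp_self u); rewrite in_middle.
by case: u Hsub => r i /= Hsub /eqP Hr; exists i; rewrite Hr.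
Qed.

Lemma Lset_mid C u : C \in Lset -> u \in C -> u.1 = row1.
Proof. by rewrite inE => /andP [_ Hsub] Hu; have := subsetP Hsub u Hu; rewrite in_middle => /eqP. Qed.

Lemma loops_sub_D : Lset \subset hc @: (D.1 :\: D.2).
Proof.
apply/subsetP => C HC; have [i HCi] := Lset_comp HC.
have HB : blk D i \notin D.2.
  apply/negP => HT.
  have : (row0, i) \in C by rewrite HCi in_comp; apply: c_edge'; apply: e01 => //.
  by move/(Lset_mid HC) => /= /eqP; rewrite r01.
apply/imsetP; exists (blk D i); first by rewrite in_setD HB blk_mem.
by rewrite HCi (hc_D (blk_mem wfD i) (blk_in wfD i)).
Qed.

Lemma loops_sub_E : Lset \subset hc @: (E.1 :\: E.2).
Proof.
apply/subsetP => C HC; have [i HCi] := Lset_comp HC.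
have HB : blk E i \notin E.2.
  apply/negP => HT.
  have : (row2, i) \in C by rewrite HCi in_comp; apply: c_edge; apply: e12 => //.
  by move/(Lset_mid HC) => /= /eqP; rewrite r21.
apply/imsetP; exists (blk E i); first by rewrite in_setD HB blk_mem.
by rewrite HCi (hc_E (blk_mem wfE i) (blk_in wfE i)).
Qed.

Lemma nloops_Lset : nloops (dD D) (dD E) = #|Lset|.
Proof. by []. Qed.

Lemma nloops_le_D : nloops (dD D) (dD E) <= #|D.1 :\: D.2|.
Proof. by rewrite nloops_Lset; apply: leq_trans (subset_leq_card loops_sub_D) (leq_imset_card _ _). Qed.

Lemma nloops_le_E : nloops (dD D) (dD E) <= #|E.1 :\: E.2|.
Proof. by rewrite nloops_Lset; apply: leq_trans (subset_leq_card loops_sub_E) (leq_imset_card _ _). Qed.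

Lemma loops_eq (N : {set {set 'I_k}}) :
  Lset \subset hc @: N -> nloops (dD D) (dD E) = #|N| ->
  Lset = hc @: N /\ {in N &, injective hc}.
Proof.
move=> Hs Hc; rewrite nloops_Lset in Hc.
have H1 := leq_imset_card hc N; have H2 := subset_leq_card Hs.
split.
  by apply/eqP; rewrite eqEcard Hs /= Hc.
by apply/imset_injP; rewrite eqn_leq H1 -Hc H2.
Qed.

Definition Th := [set X in dprod (dD D) (dD E) | through X].
Definition proj (C : {set svert k}) : {set vert k} := [set v | embo v \in C].

Lemma in_proj_top C i : (top i \in proj C) = ((row0, i) \in C).
Proof. by rewrite inE. Qed.
Lemma in_proj_bot C i : (bot i \in proj C) = ((row2, i) \in C).
Proof. by rewrite inE. Qed.

Lemma dprod_inv X : X \in dprod (dD D) (dD E) -> exists u, X = proj (comp u).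
Proof.
rewrite /dprod in_setD1 => /andP [_ /imsetP [C HC ->]].
by case/imsetP: HC => u _ ->; exists u.
Qed.

Lemma Th_top X : X \in Th -> exists i, top i \in X.
Proof. by rewrite inE => /andP [_ /andP [/existsP [i Hi] _]]; exists i. Qed.
Lemma Th_bot X : X \in Th -> exists i, bot i \in X.
Proof. by rewrite inE => /andP [_ /andP [_ /existsP [i Hi]]]; exists i. Qed.

Lemma Th_comp0 X i : X \in Th -> top i \in X -> X = proj (comp (row0, i)).
Proof.
rewrite inE => /andP [HX _]; have [u ->] := dprod_inv HX.
by rewrite in_proj_top => /comp_eq' ->.
Qed.

Lemma Th_comp2 X i : X \in Th -> bot i \in X -> X = proj (comp (row2, i)).
Proof.
rewrite inE => /andP [HX _]; have [u ->] := dprod_inv HX.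
by rewrite in_proj_bot => /comp_eq' ->.
Qed.

Definition fD (X : {set vert k}) := if [pick i | top i \in X] is Some i then blk D i else set0.
Definition gE (X : {set vert k}) := if [pick i | bot i \in X] is Some i then blk E i else set0.

Lemma fD_spec X : X \in Th -> exists2 i, top i \in X & fD X = blk D i.
Proof.
move=> HX; have [i Hi] := Th_top HX; rewrite /fD; case: pickP => [j Hj|H].
  by exists j.
by move: (H i); rewrite Hi.
Qed.

Lemma gE_spec X : X \in Th -> exists2 i, bot i \in X & gE X = blk E i.
Proof.
move=> HX; have [i Hi] := Th_bot HX; rewrite /gE; case: pickP => [j Hj|H].
  by exists j.
by move: (H i); rewrite Hi.
Qed.

Lemma fD_mem X : X \in Th -> fD X \in D.2.
Proof.
move=> HX; have [i Hi ->] := fD_spec HX; have [j Hj] := Th_bot HX.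
move: Hj; rewrite (Th_comp0 HX Hi) in_proj_bot in_comp => Hc.
apply/negPn/negP => HnT.
pose S := fun v : svert k => (v.1 == row0) && (blk D v.2 == blk D i).
have : S (row2, j).
  apply: (closedS _ Hc); last by rewrite /S /= !eqxx.
  move=> [r a] [r' b]; rewrite /S /= => /andP [/eqP -> /eqP Ha] Hxy.
  case: (G_from0 wfD wfE Hxy) => [[-> Hab]|[-> [Hab HT]]].
    by rewrite eqxx -Hab Ha eqxx.
  by move: HnT; rewrite -Ha HT.
by rewrite /S /= r20.
Qed.

Lemma gE_mem X : X \in Th -> gE X \in E.2.
Proof.
move=> HX; have [i Hi ->] := gE_spec HX; have [j Hj] := Th_top HX.
move: Hj; rewrite (Th_comp2 HX Hi) in_proj_top in_comp => Hc.
apply/negPn/negP => HnT.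
pose S := fun v : svert k => (v.1 == row2) && (blk E v.2 == blk E i).
have : S (row0, j).
  apply: (closedS _ Hc); last by rewrite /S /= !eqxx.
  move=> [r a] [r' b]; rewrite /S /= => /andP [/eqP -> /eqP Ha] Hxy.
  case: (G_from2 wfD wfE Hxy) => [[-> Hab]|[-> [Hab HT]]].
    by rewrite eqxx -Hab Ha eqxx.
  by move: HnT; rewrite -Ha HT.
by rewrite /S /= r02.
Qed.

Lemma fD_inj : {in Th &, injective fD}.
Proof.
move=> X Y HX HY; have [i Hi ->] := fD_spec HX; have [j Hj ->] := fD_spec HY.
move=> Hij; rewrite (Th_comp0 HX Hi) (Th_comp0 HY Hj).
by rewrite (comp_eq (c_edge (e00 wfD wfE Hij))).
Qed.

Lemma gE_inj : {in Th &, injective gE}.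
Proof.
move=> X Y HX HY; have [i Hi ->] := gE_spec HX; have [j Hj ->] := gE_spec HY.
move=> Hij; rewrite (Th_comp2 HX Hi) (Th_comp2 HY Hj).
by rewrite (comp_eq (c_edge (e22 Hij))).
Qed.

Lemma propnum_Th : propnum (dprod (dD D) (dD E)) = #|Th|.
Proof. by []. Qed.

Lemma propnum_le_D : propnum (dprod (dD D) (dD E)) <= #|D.2|.
Proof.
rewrite propnum_Th -(card_in_imset fD_inj); apply: subset_leq_card.
by apply/subsetP => B /imsetP [X HX ->]; exact: fD_mem.
Qed.

Lemma fD_onto : propnum (dprod (dD D) (dD E)) = #|D.2| -> fD @: Th = D.2.
Proof.
move=> H; apply/eqP; rewrite eqEcard; apply/andP; split.
  by apply/subsetP => B /imsetP [X HX ->]; exact: fD_mem.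
by rewrite (card_in_imset fD_inj) -propnum_Th H.
Qed.

Lemma gE_onto : propnum (dprod (dD D) (dD E)) = #|E.2| -> gE @: Th = E.2.
Proof.
move=> H; apply/eqP; rewrite eqEcard; apply/andP; split.
  by apply/subsetP => B /imsetP [X HX ->]; exact: gE_mem.
by rewrite (card_in_imset gE_inj) -propnum_Th H.
Qed.

End Loops.
Lemma wf_ne k (D : ({set {set 'I_k}} * {set {set 'I_k}})%type) B :
  wf D -> B \in D.1 -> exists i, i \in B.
Proof.
move=> /andP [/and3P [_ _ H0] _] HB.
have : B != set0 by apply/negP => /eqP E0; move: H0; rewrite -E0 HB.
by case/set0Pn => i Hi; exists i.
Qed.

Lemma wf_split k (D : ({set {set 'I_k}} * {set {set 'I_k}})%type) :
  wf D -> D.1 = D.2 :|: (D.1 :\: D.2).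
Proof.
move=> wfD; apply/setP => B; rewrite in_setU in_setD.
by case: (boolP (B \in D.2)) => H //=; rewrite (subsetP (wf_sub wfD)).
Qed.

Section Eq.
Variable k : nat.
Variables D E : ({set {set 'I_k}} * {set {set 'I_k}})%type.
Hypotheses (wfD : wf D) (wfE : wf E).
Hypothesis Hp : propnum (dprod (dD D) (dD E)) = #|D.2|.
Hypothesis Hs : #|E.2| = #|D.2|.
Hypothesis HlD : nloops (dD D) (dD E) = #|D.1 :\: D.2|.
Hypothesis HlE : nloops (dD D) (dD E) = #|E.1 :\: E.2|.

Local Notation G := (stack_edge (dD D) (dD E)).
Local Notation comp := (stack_comp (dD D) (dD E)).
Local Notation ND := (D.1 :\: D.2).
Local Notation NE := (E.1 :\: E.2).

Lemma ND_sub_NE : ND \subset NE.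
Proof.
have [LD injD] := loops_eq (loops_sub_D wfD wfE) HlD.
have [LE injE] := loops_eq (loops_sub_E wfD wfE) HlE.
apply/subsetP => B HB; move: (HB); rewrite in_setD => /andP [HnT HB1].
have [i Hi] := wf_ne wfD HB1.
have HC : comp (row1, i) \in Lset D E by rewrite LD -(hc_D wfD wfE HB1 Hi) imset_f.
have mid := Lset_mid HC.
have HB'1 := blk_mem wfE i.
have HB'T : blk E i \notin E.2.
  apply/negP => HT; have : (row2, i) \in comp (row1, i).
    by rewrite in_comp; apply: c_edge; apply: e12.
  by move/mid => /= /eqP; rewrite r21.
have HB'N : blk E i \in NE by rewrite in_setD HB'T HB'1.
have HcE : hc D E (blk E i) = comp (row1, i) by rewrite (hc_E wfD wfE HB'1 (blk_in wfE i)).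
have HcD : hc D E B = comp (row1, i) by rewrite (hc_D wfD wfE HB1 Hi).
suff -> : B = blk E i by [].
apply/setP => j; apply/idP/idP => Hj.
- have Hc : (row1, j) \in comp (row1, i).
    rewrite in_comp; apply: c_edge; apply: e11D => //.
    by rewrite (blk_def wfD HB1 Hi) (blk_def wfD HB1 Hj).
  have HT : blk E j \notin E.2.
    apply/negP => HT; have : (row2, j) \in comp (row1, i).
      by rewrite in_comp; apply: connect_trans (c_edge _); [rewrite -in_comp; exact: Hc| apply: e12].
    by move/mid => /= /eqP; rewrite r21.
  have HjN : blk E j \in NE by rewrite in_setD HT blk_mem.
  have := injE _ _ HjN HB'N; rewrite HcE (hc_E wfD wfE (blk_mem wfE j) (blk_in wfE j)).
  by rewrite (comp_eq' Hc) => /(_ erefl) <-; exact: blk_in.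
- have Hc : (row1, j) \in comp (row1, i).
    rewrite in_comp; apply: c_edge; apply: e11E => //.
    by rewrite (blk_def wfE HB'1 Hj).
  have HT : blk D j \notin D.2.
    apply/negP => HT; have : (row0, j) \in comp (row1, i).
      by rewrite in_comp; apply: connect_trans (c_edge' _); [rewrite -in_comp; exact: Hc| apply: e01].
    by move/mid => /= /eqP; rewrite r01.
  have HjN : blk D j \in ND by rewrite in_setD HT blk_mem.
  have := injD _ _ HjN HB; rewrite HcD (hc_D wfD wfE (blk_mem wfD j) (blk_in wfD j)).
  by rewrite (comp_eq' Hc) => /(_ erefl) <-; exact: blk_in.
Qed.

Lemma ND_eq : ND = NE.
Proof. by apply/eqP; rewrite eqEcard ND_sub_NE -HlD -HlE leqnn. Qed.

Lemma U_equiv i : (blk D i \in D.2) = (blk E i \in E.2).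
Proof.
have A : blk D i \notin D.2 -> blk E i \notin E.2.
  move=> Hn; have HN : blk D i \in NE by rewrite -ND_eq in_setD Hn blk_mem.
  move: (HN); rewrite in_setD => /andP [HnE H1].
  by rewrite (blk_def wfE H1 (blk_in wfD i)).
have B : blk E i \notin E.2 -> blk D i \notin D.2.
  move=> Hn; have HN : blk E i \in ND by rewrite ND_eq in_setD Hn blk_mem.
  move: (HN); rewrite in_setD => /andP [HnD H1].
  by rewrite (blk_def wfD H1 (blk_in wfE i)).
apply/idP/idP => H; apply/negPn/negP => Hn.
  by move: (B Hn); rewrite H.
by move: (A Hn); rewrite H.
Qed.

Lemma noDbridge i j : blk D i \in D.2 -> blk D j \in D.2 -> blk E i = blk E j ->
  blk D i = blk D j.
Proof.
move=> Hi Hj Hij.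
have Hon := fD_onto wfD wfE Hp.
move: (Hi) (Hj); rewrite -{1}Hon -Hon => /imsetP [X HX EX] /imsetP [Y HY EY].
have [i0 Hi0 EXi0] := fD_spec HX.
have [j0 Hj0 EYj0] := fD_spec HY.
suff HXY : X = Y by rewrite EX EY HXY.
rewrite (Th_comp0 HX Hi0) (Th_comp0 HY Hj0).
  have -> : comp (row0, i0) = comp (row0, i).
    by apply: comp_eq; apply: c_edge; apply: e00 => //; rewrite -EXi0 EX.
  have -> : comp (row0, j0) = comp (row0, j).
    by apply: comp_eq; apply: c_edge; apply: e00 => //; rewrite -EYj0 EY.
  congr proj; apply: comp_eq.
  apply: connect_trans (c_edge (e01 wfD wfE Hi)) _.
  apply: connect_trans (c_edge (e11E wfD wfE Hij)) _.
  exact: c_edge' (e01 wfD wfE Hj).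
Qed.

Lemma noEbridge i j : blk E i \in E.2 -> blk E j \in E.2 -> blk D i = blk D j ->
  blk E i = blk E j.
Proof.
move=> Hi Hj Hij.
have Hon := gE_onto wfD wfE (etrans Hp (esym Hs)).
move: (Hi) (Hj); rewrite -{1}Hon -Hon => /imsetP [X HX EX] /imsetP [Y HY EY].
have [i0 Hi0 EXi0] := gE_spec HX.
have [j0 Hj0 EYj0] := gE_spec HY.
suff HXY : X = Y by rewrite EX EY HXY.
rewrite (Th_comp2 HX Hi0) (Th_comp2 HY Hj0).
  have -> : comp (row2, i0) = comp (row2, i).
    by apply: comp_eq; apply: c_edge; apply: e22 => //; rewrite -EXi0 EX.
  have -> : comp (row2, j0) = comp (row2, j).
    by apply: comp_eq; apply: c_edge; apply: e22 => //; rewrite -EYj0 EY.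
  congr proj; apply: comp_eq.
  apply: connect_trans (c_edge' (e12 wfD wfE Hi)) _.
  apply: connect_trans (c_edge (e11D wfD wfE Hij)) _.
  exact: c_edge (e12 wfD wfE Hj).
Qed.

Lemma blk_same i : blk D i \in D.2 -> blk D i = blk E i.
Proof.
move=> Hi; apply/setP => j; rewrite -(blk_eq wfD) -(blk_eq wfE).
apply/eqP/eqP => H.
- apply: noEbridge => //; first by rewrite -U_equiv.
  by rewrite -U_equiv -H.
- apply: noDbridge => //.
  by rewrite U_equiv -H -U_equiv.
Qed.

Lemma T_eq : D.2 = E.2.
Proof.
apply/eqP; rewrite eqEcard Hs leqnn andbT.
apply/subsetP => B HB; have HB1 := subsetP (wf_sub wfD) B HB.
have [i Hi] := wf_ne wfD HB1.
have Ei := blk_def wfD HB1 Hi.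
by rewrite -Ei blk_same ?Ei // -U_equiv Ei.
Qed.

Lemma main_eq : D = E.
Proof.
have H1 : D.1 = E.1 by rewrite (wf_split wfD) (wf_split wfE) ND_eq T_eq.
by rewrite (surjective_pairing D) (surjective_pairing E) H1 T_eq.
Qed.

End Eq.

Section Diag.
Variable k : nat.
Variable D : ({set {set 'I_k}} * {set {set 'I_k}})%type.
Hypothesis wfD : wf D.
Local Notation G := (stack_edge (dD D) (dD D)).
Local Notation comp := (stack_comp (dD D) (dD D)).
Local Notation ND := (D.1 :\: D.2).

Lemma diag_key B i u : B \in ND -> i \in B -> u \in comp (row1, i) ->
  (u.1 == row1) && (u.2 \in B).
Proof.
rewrite in_setD => /andP [HnT HB1] Hi; rewrite in_comp => Hc.
apply: (closedS (S := fun v : svert k => (v.1 == row1) && (v.2 \in B)) _ Hc); last by rewrite /= eqxx Hi.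
move=> [r a] [r' b] /= /andP [/eqP -> Ha] Hxy.
have Ea := blk_def wfD HB1 Ha.
case: (G_from1 wfD wfD Hxy) => [[_ [_ HT]]|[[-> Hab]|[_ [_ HT]]]].
- by move: HnT; rewrite -Ea HT.
- by rewrite eqxx /= -Ea -(blk_eq wfD); case: Hab => ->.
- by move: HnT; rewrite -Ea HT.
Qed.

Lemma diag_loops : nloops (dD D) (dD D) = #|ND|.
Proof.
apply/eqP; rewrite eqn_leq nloops_le_D //=.
have Hin : forall B, B \in ND -> hc D D B \in Lset D D.
  move=> B HB; move: (HB); rewrite in_setD => /andP [_ HB1].
  have [i Hi] := wf_ne wfD HB1.
  rewrite (hc_D wfD wfD HB1 Hi) inE imset_f //=.
  by apply/subsetP => u Hu; rewrite in_middle; case/andP: (diag_key HB Hi Hu).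
have Hinj : {in ND &, injective (hc D D)}.
  move=> B B' HB HB' Heq.
  move: (HB) (HB'); rewrite !in_setD => /andP [_ HB1] /andP [_ HB'1].
  have [i Hi] := wf_ne wfD HB'1.
  have [j Hj] := wf_ne wfD HB1.
  have Hu : (row1, i) \in comp (row1, j).
    by rewrite -(hc_D wfD wfD HB1 Hj) Heq (hc_D wfD wfD HB'1 Hi) comp_self.
  case/andP: (diag_key HB Hj Hu) => _ /= HiB.
  by rewrite -(blk_def wfD HB1 HiB) (blk_def wfD HB'1 Hi).
rewrite nloops_Lset -(card_in_imset Hinj); apply: subset_leq_card.
by apply/subsetP => C /imsetP [B HB ->]; exact: Hin.
Qed.

Lemma diag_prop : propnum (dprod (dD D) (dD D)) = #|D.2|.
Proof.
apply/eqP; rewrite eqn_leq propnum_le_D //=.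
rewrite propnum_Th; apply: leq_trans (leq_imset_card (fD D) _).
apply: subset_leq_card; apply/subsetP => B HB.
have HB1 := subsetP (wf_sub wfD) B HB.
have [i Hi] := wf_ne wfD HB1.
have Ei := blk_def wfD HB1 Hi.
have Htop : top i \in proj (comp (row0, i)) by rewrite in_proj_top comp_self.
have HX : proj (comp (row0, i)) \in Th D D.
  rewrite inE; apply/andP; split.
    rewrite /dprod in_setD1; apply/andP; split.
      by apply/set0Pn; exists (top i).
    by apply: imset_f; apply: imset_f.
  apply/andP; split; apply/existsP; first by exists i.
  exists i; rewrite in_proj_bot in_comp.
  apply: connect_trans (c_edge (e01 wfD wfD _)) (c_edge (e12 wfD wfD _)); by rewrite Ei.
apply/imsetP; exists (proj (comp (row0, i))) => //.
have [i0 Hi0 ->] := fD_spec HX.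
move: Hi0; rewrite in_proj_top in_comp => Hc.
have : i0 \in B.
  apply: (closedS (S := fun v : svert k => v.2 \in B) _ Hc) => //.
  move=> [r a] [r' b] /= Ha Hxy.
  have Ea := blk_def wfD HB1 Ha.
  by case: (G_blk wfD wfD Hxy) => Hab; rewrite -Ea -(blk_eq wfD) Hab eqxx.
by move=> H; rewrite (blk_def wfD HB1 H).
Qed.

End Diag.

Lemma Jwf k s (D : ({set {set 'I_k}} * {set {set 'I_k}})%type) :
  Jpred s D -> wf D /\ #|D.2| = s.
Proof. by case/and3P => H1 H2 /eqP H3; split => //; apply/andP. Qed.

Theorem lemma3p9 (k s : nat) (hk : (1 <= k)%N) (hs : (s <= k)%N) :
  (\det (Gram k s) != 0)%R /\ lead_coef (\det (Gram k s)) = 1%R.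
Proof.
have Hm : (\det (Gram k s) \is monic)%R.
  apply: (det_monic (a := fun i => #|(val (enum_val i)).1 :\: (val (enum_val i)).2|)).
  - move=> i; rewrite mxE /gram_entry.
    have [wfD HcD] := Jwf (valP (enum_val i)).
    by rewrite diag_prop // HcD eqxx diag_loops.
  - move=> i j Hij; rewrite mxE /gram_entry.
    case: ifP => Hp; last by left.
    right; exists (nloops (dD (val (enum_val i))) (dD (val (enum_val j)))) => //.
    have [wfD HcD] := Jwf (valP (enum_val i)).
    have [wfE HcE] := Jwf (valP (enum_val j)).
    have H1 := nloops_le_D wfD wfE.
    have H2 := nloops_le_E wfD wfE.
    set l := nloops _ _ in H1 H2 *.
    set aD := #|_ :\: _| in H1 *.
    set aE := #|_ :\: _| in H2 *.
    case: (boolP ((l == aD) && (l == aE))) => Heq.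
      case/andP: Heq => /eqP HlD /eqP HlE.
      have Hp' : propnum (dprod (dD (val (enum_val i))) (dD (val (enum_val j)))) = #|(val (enum_val i)).2|.
        by rewrite HcD; apply/eqP.
      have := main_eq wfD wfE Hp' (etrans HcE (esym HcD)) HlD HlE.
      move/val_inj/enum_val_inj => Eij; by move: Hij; rewrite Eij eqxx.
    move: Heq H1 H2; clear; move: l aD aE => l aD aE.
    rewrite negb_and => /orP [] /eqP; lia.
by split; [exact: monic_neq0 | exact/monicP].
Qed.
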